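(* Let $G$ be a network whose underlying simple graph is a cactus. Then $R_G(q)$ is Schur quasi-stable, i.e. every complex zero $q$ of $R_G$ satisfies $|q|\le1$.
   Context: A network is a finite connected loopless multigraph, possibly with multiple edges. $R_G(q)$ is the probability that deleting each edge independently with probability $q$ leaves a connected spanning subgraph; it is a polynomial in $q$. The underlying simple graph has the same vertices and one edge for each adjacent pair. A cactus is a connected simple graph in which each edge lies in at most one cycle. *)

(* Defs.v *)
From HB Require Import structures.
From mathcomp Require Import all_boot all_order all_algebra all_field.
Set Implicit Arguments. Unset Strict Implicit. Unset Printing Implicit Defensive.
Import Order.TTheory GRing.Theory Num.Theory.

(* A multigraph on vertex type V with edge type E: each edge e has
   endpoints src e and tgt e (orientation is irrelevant). *)

Definition joined (V E : finType) (src tgt : E -> V) (S : {set E}) (u v : V) : bool :=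
  [exists e in S, ((src e == u) && (tgt e == v)) || ((src e == v) && (tgt e == u))].

Definition spanning_connected (V E : finType) (src tgt : E -> V) (S : {set E}) : bool :=
  [forall u : V, forall v : V, connect (joined src tgt S) u v].

Definition network (V E : finType) (src tgt : E -> V) : Prop :=
  [/\ 0 < #|V|, (forall e, src e != tgt e) & spanning_connected src tgt setT].

Definition simple_adj (V E : finType) (src tgt : E -> V) : rel V :=
  fun u v => (u != v) && joined src tgt setT u v.

Definition is_graph_cycle (V : finType) (adj : rel V) (p : seq V) : Prop :=
  [/\ uniq p, 2 < size p & cycle adj p].

Definition cycle_edge (V : finType) (p : seq V) (x y : V) : bool :=
  ((x \in p) && (next p x == y)) || ((y \in p) && (next p y == x)).

(* cactus: connected simple graph in which each edge lies in at most one
   cycle (cycles being identified with their edge sets) *)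
Definition cactus (V : finType) (adj : rel V) : Prop :=
  [/\ 0 < #|V|, symmetric adj, irreflexive adj,
      (forall u v, connect adj u v) &
      forall p1 p2 : seq V, is_graph_cycle adj p1 -> is_graph_cycle adj p2 ->
      forall u v, cycle_edge p1 u v -> cycle_edge p2 u v ->
      forall x y, cycle_edge p1 x y = cycle_edge p2 x y].

Local Open Scope ring_scope.

(* reliability polynomial R_G(q): each edge deleted independently with
   probability q; sum over the edge sets S of connected spanning subgraphs *)
Definition reliability (V E : finType) (src tgt : E -> V) : {poly algC} :=
  \sum_(S : {set E} | spanning_connected src tgt S)
     'X ^+ #|~: S| * (1 - 'X) ^+ #|S|.

(* Main.v *)
Require Import Defs.
From HB Require Import structures.
From mathcomp Require Import all_boot all_order all_algebra all_field.
From mathcomp Require Import ring.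
From Stdlib Require Import ClassicalEpsilon.
Import Order.TTheory GRing.Theory Num.Theory.

Module PartF.
Set Implicit Arguments. Unset Strict Implicit. Unset Printing Implicit Defensive.
Local Open Scope ring_scope.

Lemma set1_neq0 (T : finType) (i : T) : [set i] != set0.
Proof. by apply/set0Pn; exists i; rewrite set11. Qed.

Section Factor.
Variable R : comNzRingType.

Lemma factor_sum (T I : finType) (pi : T -> I) (f : I -> {set T} -> R) :
  \sum_(S : {set T}) \prod_(i : I) f i (S :&: [set x | pi x == i]) =
  \prod_(i : I) \sum_(X : {set T} | X \subset [set x | pi x == i]) f i X.
Proof.
rewrite bigA_distr_big_dep.
pose h (g : {ffun I -> {set T}}) : {set T} := \bigcup_(i : I) g i.
pose h' (S : {set T}) : {ffun I -> {set T}} := [ffun i => S :&: [set x | pi x == i]].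
rewrite (reindex_onto h h') /=; last first.
  move=> S _; apply/setP=> x; apply/bigcupP/idP => [[i _]|xS].
    by rewrite ffunE inE => /andP[].
  by exists (pi x) => //; rewrite ffunE !inE xS /=.
apply: eq_big => [g|g /eqP hg].
  apply/eqP/familyP => [hg i | fam].
    by rewrite -hg ffunE unfold_in subsetIr.
  apply/ffunP=> i; rewrite ffunE; apply/setP=> x; rewrite !inE.
  apply/andP/idP => [[/bigcupP[j _ xj] /eqP pxi]|xi].
    have := subsetP (fam j) x xj; rewrite inE => /eqP pxj.
    by move: xj; rewrite -pxj pxi.
  have := subsetP (fam i) x xi; rewrite inE => ->; split=> //.
  by apply/bigcupP; exists i.
apply: eq_bigr => i _; congr (f i _).
by rewrite -{2}hg ffunE.
Qed.

Lemma prod_bool (I : finType) (b : I -> bool) :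
  \prod_(i : I) ((b i)%:R : R) = ([forall i, b i])%:R.
Proof.
case: (boolP [forall i, b i]) => [/forallP H|/forallPn [i Hi]].
  by rewrite big1 // => i _; rewrite H.
by rewrite (bigD1 i) //= (negbTE Hi) mul0r.
Qed.

Lemma prod_boolP (I : finType) (P : pred I) (b : I -> bool) :
  \prod_(i | P i) ((b i)%:R : R) = ([forall i, P i ==> b i])%:R.
Proof.
case: (boolP [forall i, P i ==> b i]) => [/forallP H|/forallPn [i]].
  by rewrite big1 // => i Pi; move: (H i); rewrite Pi => /= ->.
rewrite negb_imply => /andP[Pi Hi].
by rewrite (bigD1 i) //= (negbTE Hi) mul0r.
Qed.

Lemma sum_subset_prod (T : finType) (B : {set T}) (a b : R) :
  \sum_(X : {set T} | X \subset B) \prod_(e in B) (if e \in X then a else b)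
  = \prod_(e in B) (a + b).
Proof.
pose f (i : T) (X : {set T}) : R :=
  if i \in B then (if i \in X then a else b) else (X == set0)%:R.
have := factor_sum id f.
have -> : \prod_(i : T) \sum_(X : {set T} | X \subset [set x | id x == i]) f i X
          = \prod_(i : T) (f i set0 + f i [set i]).
  apply: eq_bigr => i _.
  have -> : [set x | id x == i] = [set i] by apply/setP=> x; rewrite !inE.
  rewrite (eq_bigl (fun X => X \in powerset [set i])); last by move=> X; rewrite powersetE.
  rewrite powerset1 big_setU1 /= ?big_set1 //.
  by rewrite inE eq_sym set1_neq0.
have -> : \prod_(i : T) (f i set0 + f i [set i]) = \prod_(e in B) (a + b).
  rewrite [RHS]big_mkcond; apply: eq_bigr => i _; rewrite /f.
  case: (i \in B); first by rewrite in_set0 set11 addrC.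
  by rewrite eqxx (negbTE (set1_neq0 i)) addr0.
move=> <-; rewrite [LHS]big_mkcond /=; apply: eq_bigr => S _ /=.
rewrite [RHS](bigID (fun i => i \in B)) /=.
rewrite [X in _ * X](eq_bigr (fun i => ((i \notin S) : bool)%:R)); last first.
  move=> i /negbTE iB; rewrite /f iB; congr (_%:R); congr (nat_of_bool _).
  case: (boolP (i \in S)) => iS /=.
    by apply/negbTE/set0Pn; exists i; rewrite !inE iS eqxx.
  by apply/eqP/setP=> x; rewrite !inE; apply/andP => -[xS /eqP xi]; move: iS; rewrite -xi xS.
rewrite [X in X * _](eq_bigr (fun i => if i \in S then a else b)); last first.
  by move=> i iB; rewrite /f iB !inE eqxx andbT.
rewrite prod_boolP; case: ifP => [/subsetP sSB|/negP nsSB].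
  rewrite (_ : [forall _, _] = true) ?mulr1 //.
  by apply/forallP=> i; apply/implyP => iB; apply/negP => /sSB; apply/negP.
rewrite (_ : [forall _, _] = false) ?mulr0 //.
apply/negP => /forallP H; apply: nsSB; apply/subsetP => i iS.
by apply: contraT => iB; move: (H i); rewrite iB iS.
Qed.
End Factor.

End PartF.
Import PartF.

Module PartA.
Set Implicit Arguments. Unset Strict Implicit. Unset Printing Implicit Defensive.
Local Open Scope ring_scope.

Lemma Re_real (x : algC) : x \is Num.real -> 'Re x = x.
Proof. by move=> /Creal_ReP. Qed.

Lemma Re_tau (r : algC) : 1 < `|r| -> 'Re (2 * (r / (1 - r)) + 1) < 0.
Proof.
move=> r1.
have r1' : 1 - r != 0.
  rewrite subr_eq0; apply/eqP => e; move: r1; rewrite -e normr1 ltxx //.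
have -> : 2 * (r / (1 - r)) + 1 = (1 + r) * (1 - r)^-1.
  by field.
rewrite invC_norm mulrCA ReMl; last by rewrite rpredV rpredX // normr_real.
rewrite rmorphB /= rmorph1.
have -> : (1 + r) * (1 - r^*) = (1 - `|r| ^+ 2) + (r - r^*).
  by rewrite normCK; ring.
rewrite raddfD /= (raddfB _ r) /= Re_conj subrr addr0 Re_real; last first.
  by rewrite rpredB ?rpred1 // rpredX // normr_real.
rewrite pmulr_rlt0; first by rewrite subr_lt0 expr_gt1 // normr_ge0.
by rewrite invr_gt0 exprn_gt0 // normr_gt0.
Qed.

Lemma block_nonzero (K : finType) (A : {set K}) (s : K -> algC) :
  (1 < #|A|)%N -> (forall k, k \in A -> 'Re (2 * s k + 1) < 0) ->
  1 + \sum_(k in A) s k != 0.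
Proof.
move=> cA Hs; apply/negP => /eqP z0.
have : 2 * (1 + \sum_(k in A) s k) = (2 - (#|A|)%:R) + \sum_(k in A) (2 * s k + 1).
  rewrite big_split /= -mulr_sumr sumr_const.
  rewrite mulrDr mulr1; set t := \sum_(_ in _) _.
  rewrite -[1 *+ #|A|]mulr_natr mul1r; ring.
rewrite z0 mulr0 => /(congr1 (fun z => 'Re z)).
rewrite raddf0 raddfD /= raddf_sum /= Re_real; last first.
  by rewrite rpredB // realn.
move=> H.
suff : (2 - (#|A|)%:R) + \sum_(k in A) 'Re (2 * s k + 1) < 0 by rewrite -H ltxx.
have h1 : 2 - (#|A|)%:R <= 0 :> algC by rewrite subr_le0 (ler_nat _ 2).
have h2 : \sum_(k in A) 'Re (2 * s k + 1) < 0.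
  apply: (@lt_le_trans _ _ (\sum_(k in A) (0:algC))); last by rewrite big1.
  apply: ltr_sum; last by move=> k kA; apply: Hs.
  have /card_gt0P [k kA] : (0 < #|A|)%N by apply: ltn_trans cA.
  by apply/hasP; exists k; rewrite ?mem_index_enum.
by have := ler_ltD h1 h2; rewrite addr0.
Qed.

End PartA.
Import PartA.

Module PartG.
Set Implicit Arguments. Unset Strict Implicit. Unset Printing Implicit Defensive.

Lemma set2_eq (T : finType) (a b x y : T) :
  ([set a; b] == [set x; y]) = ((a == x) && (b == y)) || ((a == y) && (b == x)).
Proof.
apply/eqP/idP => [/setP E|].
  move: (E a) (E b) (E x) (E y); rewrite !inE !eqxx /= ?orbT.
  by do ! (case: eqP => //= ?; subst).
by case/orP => /andP[/eqP-> /eqP->] //; rewrite setUC.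
Qed.

Definition decP (P : Prop) : bool := if excluded_middle_informative P then true else false.
Lemma decPP (P : Prop) : reflect P (decP P).
Proof. by rewrite /decP; case: excluded_middle_informative => H; constructor. Qed.

Lemma next_next (T : eqType) (p : seq T) x : uniq p -> (2 < size p)%N -> x \in p ->
  next p x != x /\ next p (next p x) != x.
Proof.
move=> up sp xp; case: (rot_to xp) => i s rs.
have un : next p =1 next (x :: s) by move=> z; rewrite -rs next_rot.
have us : uniq (x :: s) by rewrite -rs rot_uniq.
have ss : (2 < size (x :: s))%N by rewrite -rs size_rot.
have := cycle_next us; rewrite !un.
case: s us ss {rs un} => [|y [|z s]] //= /and3P[xn yn _] _.
rewrite !inE !negb_or in xn *; case/andP: xn => xy /andP[xz _].
case/andP => /eqP -> /andP[/eqP -> _].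
by rewrite eq_sym xy eq_sym xz.
Qed.

Lemma path_sub_last (T : eqType) (e1 e2 : rel T) x s :
  uniq (x :: s) -> path e1 x s ->
  (forall y z, y != last x s -> e1 y z -> e2 y z) -> path e2 x s.
Proof.
elim: s x => //= y s IH x /andP[xys /andP[ys us]] /andP[exy ps] H.
apply/andP; split.
  apply: H exy; apply: contra xys => /eqP ->.
  exact: mem_last.
apply: IH => //; by rewrite /= ys.
Qed.

Section Graph.
Variables (V E : finType) (src tgt : E -> V).
Hypothesis loopless : forall e, src e != tgt e.
Implicit Types (S : {set E}) (u v x y a : V).

Local Notation adj := (simple_adj src tgt).
Local Notation J := (joined src tgt).

Definition key e : {set V} := [set src e; tgt e].

Lemma joinedE S u v : J S u v = [exists e in S, key e == [set u; v]].
Proof. by apply: eq_existsb => e; rewrite /key set2_eq. Qed.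

Lemma joined_sym S : symmetric (J S).
Proof. by move=> u v; rewrite !joinedE setUC. Qed.

Lemma joined_neq S u v : J S u v -> u != v.
Proof.
case/existsP => e /andP[_ /orP[] /andP[/eqP <- /eqP <-]] //.
by rewrite eq_sym.
Qed.

Lemma joined_sub S S' u v : S \subset S' -> J S u v -> J S' u v.
Proof.
move=> /subsetP sS /existsP[e /andP[eS H]]; apply/existsP; exists e.
by rewrite sS.
Qed.

Lemma joined_adj S u v : J S u v -> adj u v.
Proof.
move=> H; rewrite /simple_adj (joined_neq H) /=.
by apply: joined_sub H; apply: subsetT.
Qed.

Lemma adj_sym : symmetric adj.
Proof. by move=> u v; rewrite /simple_adj eq_sym joined_sym. Qed.

Lemma conn_char S : (forall u v, connect adj u v) ->
  spanning_connected src tgt S <-> (forall u v, adj u v -> connect (J S) u v).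
Proof.
move=> Hc; split.
  by move=> /forallP H u v _; move/forallP: (H u); apply.
move=> H; apply/forallP => u; apply/forallP => v.
by apply: (connect_sub H); apply: Hc.
Qed.

Lemma walk S (p : seq V) a : uniq p -> a \in p ->
  (forall x, x \in p -> x != a -> J S x (next p x)) ->
  connect (J S) (next p a) a.
Proof.
move=> up ap H.
pose e1 := fun x y => (x \in p) && (next p x == y).
have ce1 : cycle e1 p by apply: cycle_from_next => // x xp; rewrite /e1 xp eqxx.
have := connect_cycle ce1; move=> /(_ (next p a) a); rewrite mem_next ap.
move=> /(_ isT isT) /connectP [s ps la].
case: (shortenP ps) la => s' ps' us' _ la.
apply/connectP; exists s' => //.
apply: (path_sub_last us' ps') => y z; rewrite -la => ya /andP[yp /eqP <-].
exact: H.
Qed.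

Lemma make_cycle S u v : connect (J S) u v -> ~~ J S u v -> adj u v ->
  exists p, [/\ is_graph_cycle adj p, v \in p, next p v = u &
            forall x, x \in p -> x != v -> J S x (next p x)].
Proof.
move=> /connectP [s ps lv] nJ auv.
have uv : u != v by case/andP: auv.
case: (shortenP ps) lv => s' ps' us' _ lv.
have adjvu : adj v u by rewrite adj_sym.
exists (u :: s'); split.
- split => //.
  + case: s' ps' us' lv => [|y [|z s']] //=.
      by move=> _ _ /eqP; rewrite eq_sym (negbTE uv).
    by rewrite andbT => Juy _ vy; rewrite vy Juy in nJ.
  + rewrite /= rcons_path -lv adjvu andbT.
    by apply: sub_path ps' => x y /joined_adj.
- by rewrite lv mem_last.
- have := cycle_next us'; rewrite /= rcons_path => /andP[_ /eqP].
  by rewrite -lv.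
- pose e' := fun x y => (x == v) || J S x y.
  have ce : cycle e' (u :: s').
    rewrite /= rcons_path -lv /e' eqxx andbT.
    by apply: sub_path ps' => x y ->; rewrite orbT.
  move=> x xp xv; have := next_cycle ce xp.
  by rewrite /e' (negbTE xv).
Qed.

Definition cyckeys (p : seq V) : {set {set V}} := [set [set x; next p x] | x in p].

Lemma cycle_edge_key p x y : cycle_edge p x y = ([set x; y] \in cyckeys p).
Proof.
apply/idP/imsetP => [/orP[]/andP[xp /eqP ny]|[z zp /eqP]].
- by exists x => //; rewrite ny.
- by exists y => //; rewrite ny setUC.
rewrite set2_eq /cycle_edge => /orP[]/andP[/eqP -> /eqP ->].
  by rewrite zp eqxx.
by rewrite zp eqxx orbT.
Qed.

Definition cyc k := decP (exists p, is_graph_cycle adj p /\ k \in cyckeys p).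
Definition blk k k' := (k == k') ||
  decP (exists p, [/\ is_graph_cycle adj p, k \in cyckeys p & k' \in cyckeys p]).
Definition blkset k := [set k' | blk k k'].

Definition bundle k := [set e | key e == k].
Definition DS S : {set {set V}} := [set k | (bundle k != set0) && [disjoint bundle k & S]].
Definition condD (D : {set {set V}}) : bool :=
  [forall k in D, cyc k && [forall k' in D, blk k k' ==> (k' == k)]].

Lemma disj_bundle S k : [disjoint bundle k & S] = ~~ [exists e in S, key e == k].
Proof.
apply/idP/idP => [dis|/existsPn H].
  apply/existsP => -[e /andP[eS /eqP ke]].
  by have := disjointFr dis (_ : e \in bundle k); rewrite eS inE ke eqxx => /(_ isT).
rewrite disjoint_subset; apply/subsetP => e; rewrite !inE => /eqP ke; apply/negP => eS.
by move: (H e); rewrite eS ke eqxx.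
Qed.

Lemma DS_adj S u v : adj u v -> ([set u; v] \in DS S) = ~~ J S u v.
Proof.
case/andP => _ Juv; rewrite inE disj_bundle -joinedE andb_idl //.
move=> _; move: Juv; rewrite joinedE => /existsP[e /andP[_ ke]].
by apply/set0Pn; exists e; rewrite inE.
Qed.

Lemma DS_notJ S k x y : k \in DS S -> k = [set x; y] -> ~~ J S x y.
Proof. by rewrite inE disj_bundle joinedE => /andP[_ H] <-. Qed.

Lemma DS_edge S k : k \in DS S -> exists u v, [/\ k = [set u; v], adj u v & ~~ J S u v].
Proof.
move=> kD; have := kD; rewrite inE => /andP[/set0Pn [e]]; rewrite inE => /eqP ke _.
exists (src e), (tgt e); have kk : k = [set src e; tgt e] by rewrite -ke.
split => //; last exact: DS_notJ kD kk.
rewrite /simple_adj loopless /=; apply/existsP; exists e.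
by rewrite inE !eqxx.
Qed.

Section Cactus.
Hypothesis C : cactus adj.

Lemma cactus_keys p1 p2 k : is_graph_cycle adj p1 -> is_graph_cycle adj p2 ->
  k \in cyckeys p1 -> k \in cyckeys p2 -> cyckeys p1 = cyckeys p2.
Proof.
move=> c1 c2 k1 k2.
case/imsetP: (k1) => x xp kx.
have e1 : cycle_edge p1 x (next p1 x) by rewrite cycle_edge_key -kx.
have e2 : cycle_edge p2 x (next p1 x) by rewrite cycle_edge_key -kx.
case: C => _ _ _ _ /(_ p1 p2 c1 c2 _ _ e1 e2) H.
apply/setP => k'; apply/imsetP/imsetP => -[z zp ->].
  by apply/imsetP; rewrite -cycle_edge_key -H cycle_edge_key; apply/imsetP; exists z.
by apply/imsetP; rewrite -cycle_edge_key H cycle_edge_key; apply/imsetP; exists z.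
Qed.

Lemma blk_refl k : blk k k.
Proof. by rewrite /blk eqxx. Qed.

Lemma blk_sym k k' : blk k k' = blk k' k.
Proof.
rewrite /blk eq_sym; congr (_ || _).
by apply/decPP/decPP => -[p [c a b]]; exists p.
Qed.

Lemma blk_trans k1 k2 k3 : blk k1 k2 -> blk k2 k3 -> blk k1 k3.
Proof.
rewrite /blk; case: eqVneq => [->|_] //= H1.
case: eqVneq => [<-|_] //=; first by rewrite H1 orbT.
move: H1 => /decPP [p [cp a b]] /decPP [p' [cp' b' c']].
apply/orP; right; apply/decPP; exists p; split => //.
by rewrite (cactus_keys cp cp' b b').
Qed.

Lemma blkset_eq k k' : (blkset k == blkset k') = blk k k'.
Proof.
apply/eqP/idP => [Ek|H].
  have : k' \in blkset k' by rewrite inE blk_refl.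
  by rewrite -Ek inE.
apply/setP => x; rewrite !inE; apply/idP/idP => Hx.
  by apply: blk_trans Hx; rewrite blk_sym.
exact: blk_trans Hx.
Qed.

Lemma cycle_two_keys p k : is_graph_cycle adj p -> k \in cyckeys p ->
  exists2 k', k' \in cyckeys p & k' != k.
Proof.
case=> up sp _ /imsetP[x xp ->].
have [n1 n2] := next_next up sp xp.
exists [set next p x; next p (next p x)]; first by apply/imsetP; exists (next p x); rewrite ?mem_next.
by rewrite set2_eq eqxx (negbTE n1) (negbTE n2).
Qed.

Lemma char S : spanning_connected src tgt S = condD (DS S).
Proof.
have Hc : forall u v, connect adj u v by case: C.
apply/idP/idP => [sc|cd].
- apply/forallP => k; apply/implyP => kD.
  have [u [v [kuv auv nJ]]] := DS_edge kD.
  have cuv : connect (J S) u v by apply: (conn_char S Hc).1 sc u v auv.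
  have [p [cp vp nv Hp]] := make_cycle cuv nJ auv.
  have kp : k \in cyckeys p by apply/imsetP; exists v => //; rewrite nv kuv setUC.
  apply/andP; split; first by apply/decPP; exists p.
  apply/forallP => k'; apply/implyP => k'D; apply/implyP => bkk'.
  case: eqVneq => // k'k.
  move: bkk'; rewrite /blk eq_sym (negbTE k'k) /= => /decPP [p' [cp' kp' k'p']].
  have : k' \in cyckeys p by rewrite (cactus_keys cp cp' kp kp').
  case/imsetP => x xp k'x.
  case: (eqVneq x v) => [xv|xv].
    by move: k'k; rewrite k'x xv nv kuv setUC eqxx.
  by have := DS_notJ k'D k'x; rewrite Hp.
- apply/(conn_char S Hc) => u v auv.
  case: (boolP (J S u v)) => [J1|nJ]; first exact: connect1.
  have kD : [set u; v] \in DS S by rewrite DS_adj.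
  move/forallP: cd => /(_ [set u; v]) /implyP /(_ kD) /andP[/decPP [p [cp kp]] /forallP Hk].
  case/imsetP: (kp) => a ap kaa.
  case: (cp) => up sp cadj.
  have W : connect (J S) (next p a) a.
    apply: walk => // x xp xa; apply: contraT => nJx.
    have kxD : [set x; next p x] \in DS S by rewrite DS_adj // (next_cycle cadj xp).
    have bk : blk [set u; v] [set x; next p x].
      apply/orP; right; apply/decPP; exists p; split => //.
      by apply/imsetP; exists x.
    have := Hk [set x; next p x]; rewrite kxD bk /= kaa set2_eq (negbTE xa) /=.
    case: eqVneq => //= ->; have [_ n2] := next_next up sp ap.
    by rewrite (negbTE n2).
  move/eqP: kaa; rewrite set2_eq => /orP[]/andP[/eqP -> /eqP ->] //.
  by rewrite (sym_connect_sym (@joined_sym S)).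
Qed.

End Cactus.

End Graph.

End PartG.
Import PartG.

Module PartM.
Set Implicit Arguments. Unset Strict Implicit. Unset Printing Implicit Defensive.
Local Open Scope ring_scope.

Section Main.
Variables (V E : finType) (src tgt : E -> V).
Variable q : algC.
Implicit Types (S X : {set E}) (k : {set V}) (D : {set {set V}}).

Local Notation bundle := (bundle src tgt).
Local Notation key := (key src tgt).
Local Notation DS := (DS src tgt).

Definition cw (S : {set E}) e : algC := if e \in S then 1 - q else q.
Definition rho (k : {set V}) : algC := (bundle k != set0)%:R * q ^+ #|bundle k|.
Definition f1 (D : {set {set V}}) (k : {set V}) (X : {set E}) : algC :=
  ((((bundle k != set0) && [disjoint bundle k & X]) == (k \in D)) : bool)%:R *
  \prod_(e | key e == k) cw X e.

Lemma level1_block D k :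
  \sum_(X : {set E} | X \subset [set x | key x == k]) f1 D k X = if k \in D then rho k else 1 - rho k.
Proof.
have -> : [set x | key x == k] = bundle k by [].
set B := bundle k.
have W (X : {set E}) : \prod_(e | key e == k) cw X e = \prod_(e in B) cw X e.
  by apply: eq_bigl => e; rewrite inE.
have W0 : \prod_(e in B) cw set0 e = q ^+ #|B|.
  by rewrite -prodr_const; apply: eq_bigr => e _; rewrite /cw inE.
have dis (X : {set E}) : X \subset B -> [disjoint B & X] = (X == set0).
  by move=> /setIidPr XB; rewrite -setI_eq0 XB.
rewrite (bigD1 set0) ?sub0set //= /f1 W W0 dis ?sub0set // eqxx andbT.
have Hrest : \sum_(X : {set E} | (X \subset B) && (X != set0)) f1 D k X =
             (k \notin D)%:R * (1 - q ^+ #|B|).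
  rewrite (eq_bigr (fun X => (k \notin D)%:R * \prod_(e in B) cw X e)); last first.
    move=> X /andP[XB Xn]; rewrite /f1 W dis // (negbTE Xn) andbF.
    by case: (k \in D).
  rewrite -mulr_sumr; congr (_ * _).
  have := sum_subset_prod B (1 - q) q; rewrite subrK.
  rewrite prodr_const expr1n => S1.
  rewrite (bigD1 set0) ?sub0set //= in S1.
  rewrite /cw in W0 *; rewrite W0 in S1.
  by apply/eqP; rewrite eq_sym subr_eq addrC; apply/eqP; rewrite S1.
rewrite /f1 in Hrest; rewrite Hrest /rho.
case: (k \in D); case: (B != set0) => /=; rewrite ?mul0r ?mul1r ?addr0 ?add0r //.
by rewrite subr0 addrC subrK.
Qed.

Lemma dis2 (B S : {set E}) : [disjoint B & S :&: B] = [disjoint B & S].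
Proof. by rewrite -!setI_eq0 setIC -setIA setIid setIC. Qed.

Lemma eqset_forall (T : finType) (A B : {set T}) :
  [forall k, (k \in A) == (k \in B)] = (A == B).
Proof.
apply/forallP/eqP => [H|->]; last by move=> k.
by apply/setP => k; apply/eqP.
Qed.

Lemma level1 (P : {set {set V}} -> bool) :
  \sum_(S : {set E}) (P (DS S))%:R * \prod_(e : E) cw S e =
  \sum_(D : {set {set V}}) (P D)%:R * \prod_(k : {set V}) (if k \in D then rho k else 1 - rho k).
Proof.
rewrite (partition_big DS predT) //=; apply: eq_bigr => D _.
transitivity ((P D)%:R * \sum_(S : {set E} | DS S == D) \prod_(e : E) cw S e).
  by rewrite mulr_sumr; apply: eq_bigr => S /eqP ->.
congr (_ * _).
rewrite -(eq_bigr _ (fun k _ => level1_block D k)) -factor_sum.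
rewrite big_mkcond; apply: eq_bigr => S _.
rewrite /f1 big_split /= prod_bool.
have -> : [forall k, ((bundle k != set0) && [disjoint bundle k & S :&: [set x | key x == k]])
            == (k \in D)] = (DS S == D).
  rewrite -eqset_forall; apply: eq_forallb => k.
  by rewrite (_ : [set x | key x == k] = bundle k) // dis2 [in RHS]inE.
case: (DS S == D); rewrite ?mul0r ?mul1r //.
rewrite (partition_big key predT) //=; apply: eq_bigr => k _.
by apply: eq_bigr => e /eqP ke; rewrite /cw !inE ke eqxx andbT.
Qed.

Local Notation adj := (simple_adj src tgt).
Local Notation cyc := (cyc src tgt).
Local Notation blk := (blk src tgt).
Local Notation blkset := (blkset src tgt).

Definition validX (X : {set {set V}}) := [forall k in X, cyc k] && (#|X| <= 1)%N.

Lemma condD_valid (C : cactus adj) D :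
  condD src tgt D = [forall B, validX (D :&: [set k | blkset k == B])].
Proof.
apply/forallP/forallP => [H B|H k].
  apply/andP; split.
    apply/forallP => k; apply/implyP; rewrite !inE => /andP[kD _].
    by have /implyP/(_ kD)/andP[] := H k.
  apply/card_le1_eqP => x y; rewrite !inE => /andP[xD /eqP xB] /andP[yD /eqP yB].
  have /implyP/(_ xD)/andP[_ /forallP/(_ y)] := H x.
  by rewrite yD -blkset_eq // xB yB eqxx => /eqP.
apply/implyP => kD.
have /andP[/forallP Hc /card_le1_eqP Hl] := H (blkset k).
apply/andP; split.
  by have /implyP := Hc k; apply; rewrite !inE kD eqxx.
apply/forallP => k'; apply/implyP => k'D; apply/implyP => bk.
apply/eqP; apply: Hl; rewrite !inE ?kD ?k'D ?eqxx //=.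
by rewrite eq_sym blkset_eq.
Qed.

Definition sig k := rho k / (1 - rho k).
Definition g (X : {set {set V}}) : algC := (validX X)%:R * \prod_(k in X) sig k.

Lemma level2 (C : cactus adj) :
  \sum_(D : {set {set V}}) (condD src tgt D)%:R * \prod_(k in D) sig k =
  \prod_(B : {set {set V}})
     \sum_(X : {set {set V}} | X \subset [set k | blkset k == B]) g X.
Proof.
rewrite -(factor_sum blkset (fun _ (Y : {set {set V}}) => g Y)); apply: eq_bigr => D _.
rewrite /g [RHS]big_split /= prod_bool -condD_valid //; congr (_ * _).
rewrite (partition_big blkset predT) //=; apply: eq_bigr => B _.
by apply: eq_bigl => k; rewrite !inE.
Qed.

Lemma block_sum (P : {set {set V}}) :
  \sum_(X : {set {set V}} | X \subset P) g X = 1 + \sum_(k in [set k in P | cyc k]) sig k.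
Proof.
rewrite (bigD1 set0) ?sub0set //= /g.
have -> : validX set0 by rewrite /validX cards0 andbT; apply/forallP => k; rewrite inE.
rewrite big_set0 mulr1; congr (_ + _).
rewrite (bigID validX) /= [Z in _ + Z]big1 ?addr0; last by move=> Y /andP[_ /negbTE ->]; rewrite mul0r.
rewrite (eq_bigr (fun k => \prod_(j in [set k]) sig j)); last by move=> k _; rewrite big_set1.
rewrite -(@big_imset _ _ _ _ _ (@set1 _) _ (fun Y : {set {set V}} => \prod_(j in Y) sig j) (in2W (@set1_inj _))) /=.
rewrite (eq_bigr (fun Y : {set {set V}} => \prod_(j in Y) sig j)); last by move=> Y /andP[_ ->]; rewrite mul1r.
apply: eq_bigl => Y; apply/idP/imsetP => [/andP[/andP[XP Xn] /andP[/forallP Hc c1]]|[k kA ->]].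
  have : #|Y| == 1%N by rewrite eqn_leq c1 card_gt0.
  case/cards1P => k Xk; exists k => //; rewrite inE.
  have kX : k \in Y by rewrite Xk set11.
  by rewrite (subsetP XP _ kX) /=; have /implyP := Hc k; apply.
move: kA; rewrite inE => /andP[kP ck].
rewrite sub1set kP set1_neq0 /validX cards1 /= andbT.
by apply/forallP => j; apply/implyP; rewrite inE => /eqP ->.
Qed.

Section Q1.
Hypothesis q1 : 1 < `|q|.

Lemma rho_prop k : (rho k = 0) \/ (1 < `|rho k|).
Proof.
rewrite /rho; case: (boolP (bundle k != set0)) => [bn|_] /=; last by left; rewrite mul0r.
right; rewrite mul1r normrX expr_gt1 ?normr_ge0 //.
by rewrite card_gt0.
Qed.

Lemma one_sub_rho k : 1 - rho k != 0.
Proof.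
rewrite subr_eq0; case: (rho_prop k) => [->|H]; first by rewrite oner_eq0.
by apply/eqP => e; move: H; rewrite -e normr1 ltxx.
Qed.

Lemma tk_factor D :
  \prod_(k : {set V}) (if k \in D then rho k else 1 - rho k) =
  (\prod_(k : {set V}) (1 - rho k)) * \prod_(k in D) sig k.
Proof.
rewrite [X in _ * X]big_mkcond -big_split /=; apply: eq_bigr => k _.
case: (k \in D); last by rewrite mulr1.
by rewrite /sig mulrC divfK // one_sub_rho.
Qed.

Lemma cyc_bundle k : cyc k -> bundle k != set0.
Proof.
move/decPP => [p [[up sp cp] /imsetP [x xp ->]]].
have /andP[_ J] := next_cycle cp xp.
move: J; rewrite joinedE => /existsP [e /andP[_ ke]].
by apply/set0Pn; exists e; rewrite inE.
Qed.

Lemma block_nz (C : cactus adj) B :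
  1 + \sum_(k in [set k in [set k | blkset k == B] | cyc k]) sig k != 0.
Proof.
set A := [set k in _ | _].
case: (boolP (A == set0)) => [/eqP ->|An].
  by rewrite big_set0 addr0 oner_eq0.
apply: block_nonzero.
  case/set0Pn: An => k0; rewrite !inE => /andP[/eqP kB ck0].
  have := ck0; move/decPP => [p [cp kp]].
  have [k1 k1p k10] := cycle_two_keys cp kp.
  apply/card_gt1P; exists k0, k1; split => //.
  - by rewrite !inE kB eqxx ck0.
  - rewrite !inE; apply/andP; split; last by apply/decPP; exists p.
    rewrite -kB eq_sym blkset_eq //; apply/orP; right; apply/decPP; exists p; split => //.
  - by rewrite eq_sym.
move=> k; rewrite !inE => /andP[_ ck].
apply: Re_tau; have bk := cyc_bundle ck.
by rewrite /rho bk mul1r normrX expr_gt1 ?normr_ge0 // card_gt0.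
Qed.

End Q1.

End Main.


End PartM.
Import PartM.

Unset Implicit Arguments. Set Strict Implicit.
Local Open Scope ring_scope.

Theorem corollary3p4 (V E : finType) (src tgt : E -> V) :
  network src tgt -> cactus (simple_adj src tgt) ->
  forall q : algC, root (reliability src tgt) q -> `|q| <= 1.
Proof.
move=> [_ ll _] C q; apply: contraTT => nq.
have q1 : 1 < `|q| by rewrite real_ltNge ?normr_real ?real1.
rewrite rootE /reliability horner_sum big_mkcond /=.
rewrite (eq_bigr (fun S => (condD src tgt (DS src tgt S))%:R * \prod_(e : E) cw q S e)); last first.
  move=> S _; rewrite -(char ll C S).
  case: (spanning_connected src tgt S); rewrite ?mul0r ?mul1r //.
  rewrite !hornerE (bigID (fun e => e \in S)) /= mulrC -!prodr_const.
  congr (_ * _); first by apply: eq_bigr => e eS; rewrite /cw eS.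
  by apply: eq_big => [e|e]; rewrite ?inE // /cw => /negbTE ->.
rewrite level1 (eq_bigr (fun D => (\prod_(k : {set V}) (1 - rho src tgt q k)) *
    ((condD src tgt D)%:R * \prod_(k in D) sig src tgt q k))); last first.
  by move=> D _; rewrite (tk_factor _ _ q1) mulrCA.
rewrite -mulr_sumr (level2 q C) mulf_neq0 //.
  by apply/prodf_neq0 => k _; apply: one_sub_rho.
apply/prodf_neq0 => B _; rewrite block_sum.
exact: block_nz.
Qed.
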